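(* Let $E$ be a Banach space with $E = V \oplus W$ ($V, W$ linear subspaces), and let $\Phi\colon E \to \mathbb{R}$ be locally Lipschitz. For $w \in W$ set $\varphi(w) = \sup_{g \in V} \Phi(g+w)$ and $$V(w) = \{ v \in V : \Phi(v+w) = \max_{g \in V} \Phi(g+w) \}.$$ Assume: (a) for every $w \in W$, $V(w) \neq \varnothing$ (so $\varphi(w)=\Phi(v+w)$ for $v\in V(w)$); (b) the functional $\varphi\colon W \to \mathbb{R}$ is bounded below and attains its minimum at some point $\overline{w} \in W$; (c) there exists a continuous map $s\colon W \to V$ with $s(w) \in V(w)$ for all $w \in W$. Then $\overline{u} = s(\overline{w}) + \overline{w}$ is a critical point of $\Phi$, i.e. $0 \in \partial \Phi(\overline{u})$, and $$\Phi(\overline{u}) = \min_{w \in W} \max_{v \in V} \Phi(v+w).$$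
   Context: For a locally Lipschitz $\Phi\colon E\to\mathbb{R}$, the generalized directional derivative is $\Phi^\circ(x;v) = \limsup_{y \to x,\, t \downarrow 0} \frac{\Phi(y+tv) - \Phi(y)}{t}$, and the Clarke subdifferential is $\partial\Phi(x) = \{x^* \in E^* : \Phi^\circ(x;v) \ge \langle x^*, v\rangle \text{ for all } v \in E\}$. A point $x$ is a critical point of $\Phi$ if $0 \in \partial\Phi(x)$. *)

(* Defs.v *)
From HB Require Import structures.
From mathcomp Require Import all_boot all_order all_algebra.
From mathcomp Require Import all_classical all_reals all_analysis.
Set Implicit Arguments. Unset Strict Implicit. Unset Printing Implicit Defensive.
Import Order.TTheory GRing.Theory Num.Theory.
Import numFieldNormedType.Exports.
Local Open Scope classical_set_scope.
Local Open Scope ring_scope.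

Section Defs.
Context {R : realType} {E : normedModType R}.

Definition locally_lipschitz (Phi : E -> R) : Prop :=
  forall x : E, exists r : R, exists L : R, 0 < r /\
    forall y z : E, ball x r y -> ball x r z ->
      `|Phi y - Phi z| <= L * `|y - z|.

Definition lin_subspace (V : set E) : Prop :=
  V 0 /\ (forall u v, V u -> V v -> V (u + v)) /\
  (forall (a : R) u, V u -> V (a *: u)).

Definition direct_sum_decomp (V W : set E) : Prop :=
  (forall e : E, exists v w, V v /\ W w /\ e = v + w) /\ V `&` W = [set 0].

(* Clarke generalized directional derivative:
   limsup_{y -> x, t \downarrow 0} (Phi(y + t v) - Phi y) / t,
   written as inf over delta > 0 of the sup over y in ball x delta, 0 < t < delta. *)
Definition gen_dir_deriv (Phi : E -> R) (x v : E) : \bar R :=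
  ereal_inf [set ereal_sup
     [set ((Phi (yt.1 + yt.2 *: v) - Phi yt.1) / yt.2)%:E
        | yt in [set yt : E * R | ball x d yt.1 /\ 0 < yt.2 < d]]
   | d in [set d : R | 0 < d]].

Definition clarke_subdiff (Phi : E -> R) (x : E) : set (E -> R) :=
  [set f | (forall (a : R) (u v : E), f (a *: u + v) = a * f u + f v) /\
           continuous f /\
           forall v : E, ((f v)%:E <= gen_dir_deriv Phi x v)%E].

Definition critical_point (Phi : E -> R) (x : E) : Prop :=
  clarke_subdiff Phi x (fun _ => 0).

Definition varphi (Phi : E -> R) (V : set E) (w : E) : \bar R :=
  ereal_sup [set (Phi (g + w))%:E | g in V].

Definition Vmax (Phi : E -> R) (V : set E) (w : E) : set E :=
  [set v | V v /\ (Phi (v + w))%:E = varphi Phi V w].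

End Defs.

(* Main.v *)
Require Import Defs.
From HB Require Import structures.
From mathcomp Require Import all_boot all_order all_algebra.
From mathcomp Require Import all_classical all_reals all_analysis.
From mathcomp Require Import lra.
Import Order.TTheory GRing.Theory Num.Theory.
Import numFieldNormedType.Exports.
Local Open Scope classical_set_scope.
Local Open Scope ring_scope.

Lemma cont_eps (R : realType) (E : normedModType R) (W : set E) (s : E -> E) (x : E) :
  {within W, continuous s} -> W x ->
  forall e : R, 0 < e -> exists2 d : R, 0 < d &
    forall w, W w -> `|x - w| < d -> `|s x - s w| < e.
Proof.
move=> hs Wx e e0.
have := (subspace_continuousP _ _).1 hs x Wx.
move=> /cvgrPdist_lt /(_ e e0).
rewrite /within /= => /nbhs_normP [d d0 H].
exists d => // w Ww xw.
apply: (H w) => //.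
Qed.

Lemma small_t (R : realType) (k1 k2 k3 c1 c2 : R) :
  0 < k1 -> 0 < k2 -> 0 < k3 -> 0 <= c1 -> 0 <= c2 ->
  exists t, [/\ 0 < t, t < k1, t * c1 < k2 & t * c2 < k3].
Proof.
move=> k10 k20 k30 c10 c20.
pose m := Num.min k1 (Num.min (k2 / (c1 + 1)) (k3 / (c2 + 1))).
have m0 : 0 < m.
  by rewrite /m !lt_min k10 !divr_gt0 // ltr_wpDl.
have m1 : m <= k1 by rewrite /m ge_min lexx.
have m2 : m <= k2 / (c1 + 1) by rewrite /m !ge_min lexx orbT.
have m3 : m <= k3 / (c2 + 1) by rewrite /m !ge_min lexx !orbT.
exists (m / 2); split.
- by rewrite divr_gt0.
- apply: lt_le_trans m1; rewrite ltr_pdivrMr // ltr_pMr //; lra.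
- apply: (@le_lt_trans _ _ (m / 2 * (c1 + 1))).
    by rewrite ler_wpM2l ?divr_ge0 ?ltW //; lra.
  rewrite -ltr_pdivlMr ?ltr_wpDl //; apply: lt_le_trans m2; lra.
- apply: (@le_lt_trans _ _ (m / 2 * (c2 + 1))).
    by rewrite ler_wpM2l ?divr_ge0 ?ltW //; lra.
  rewrite -ltr_pdivlMr ?ltr_wpDl //; apply: lt_le_trans m3; lra.
Qed.

Theorem theorem8 (R : realType) (E : completeNormedModType R)
  (V W : set E) (Phi : E -> R) (s : E -> E) (wbar : E) :
  lin_subspace V -> lin_subspace W -> direct_sum_decomp V W ->
  locally_lipschitz Phi ->
  (* (a) *)
  (forall w, W w -> Vmax Phi V w !=set0) ->
  (* (b) *)
  (exists m : R, forall w, W w -> (m%:E <= varphi Phi V w)%E) ->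
  W wbar -> (forall w, W w -> (varphi Phi V wbar <= varphi Phi V w)%E) ->
  (* (c) *)
  {within W, continuous s} ->
  (forall w, W w -> Vmax Phi V w (s w)) ->
  critical_point Phi (s wbar + wbar) /\
  (Phi (s wbar + wbar))%:E = ereal_inf [set varphi Phi V w | w in W].
Proof.
move=> [V0 [VD VZ]] [W0 [WD WZ]] [dec _] _ _ _ Wwb wmin hs sV.
have [Vswb Phiwb] := sV _ Wwb.
split; last first.
  rewrite Phiwb; apply/eqP; rewrite eq_le; apply/andP; split.
    by apply: le_ereal_inf_tmp => _ [w Ww <-]; exact: wmin.
  by apply: ereal_inf_lbound; exists wbar.
split; first by move=> a u v; rewrite mulr0 addr0.
split; first exact: cst_continuous.
move=> v; have [v1 [w1 [Vv1 [Ww1 ->]]]] := dec v.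
apply: le_ereal_inf_tmp => _ [d d0 <-].
have [del del0 Hdel] := @cont_eps R E W s wbar hs Wwb (d / 2) ltac:(by rewrite divr_gt0).
have [t [t0 td tw tv]] := @small_t R d del (d / 2) `|w1| `|v1| d0 del0 ltac:(by rewrite divr_gt0) (normr_ge0 _) (normr_ge0 _).
pose w' := wbar + t *: w1.
have Ww' : W w' by apply: WD => //; exact: WZ.
have [Vsw' Phiw'] := sV _ Ww'.
pose y := (s w' - t *: v1) + wbar.
have Vy : V (s w' - t *: v1) by apply: VD => //; rewrite -scaleNr; exact: VZ.
apply: (@le_trans _ _ (((Phi (y + t *: (v1 + w1)) - Phi y) / t)%:E)); last first.
  apply: ereal_sup_ubound; exists (y, t) => //=; split; last by rewrite t0.
  rewrite -ball_normE /ball /=.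
  have -> : s wbar + wbar - y = (s wbar - s w') + t *: v1.
    by rewrite /y opprD opprB addrACA subrr addr0 addrA addrAC.
  rewrite (splitr d); apply: le_lt_trans (ler_normD _ _) _.
  apply: ltrD; last by rewrite normrZ gtr0_norm.
  apply: Hdel => //; rewrite /w' opprD addrA subrr add0r normrN normrZ gtr0_norm //.
rewrite lee_fin.
have -> : y + t *: (v1 + w1) = s w' + w'.
  rewrite /y /w' scalerDr.
  by rewrite addrACA subrK.
apply: divr_ge0; last exact: ltW.
rewrite subr_ge0 -lee_fin Phiw'.
apply: le_trans (wmin _ Ww').
by apply: ereal_sup_ubound; exists (s w' - t *: v1).
Qed.
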